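(* Fix $i_1,\dots,i_m\in\{1,\dots,n\}$ and integers $a,r,t\ge0$, $s\ge1$ with $2a+s+r+t=m$. If $r=0$, then $$\operatorname{ad}(X)\big([\eta^ax^s\partial^t;i_1,\dots,i_m]\big)=\tfrac{\sqrt{-1}}{\sqrt2}\,[\eta^ax^{s-1}\gamma\,\partial^t;i_1,\dots,i_m],$$ and if $r=1$, then $$\operatorname{ad}(X)\big([\eta^ax^s\gamma\,\partial^t;i_1,\dots,i_m]\big)=\tfrac{2\sqrt{-1}(a+1)}{\sqrt2}[\eta^{a+1}x^{s-1}\partial^t;i_1,\dots,i_m]+\tfrac{2\sqrt{-1}(t+1)}{\sqrt2}[\eta^ax^s\partial^{t+1};i_1,\dots,i_m].$$
   Context: Fix $n\ge1$ and an invertible complex matrix $\eta=(\eta^{ij})$ with $\eta^{ij}=\eta^{ji}$. $W(2n|n)$ is the associative superalgebra generated by even $x^1,\dots,x^n,\partial_1,\dots,\partial_n$ and odd $\gamma^1,\dots,\gamma^n$ with relations $x^ix^j=x^jx^i$, $\partial_i\partial_j=\partial_j\partial_i$, $\partial_ix^j-x^j\partial_i=\delta_i^j$, $\gamma^i$ commuting with all $x^j,\partial_j$, $\gamma^i\gamma^j+\gamma^j\gamma^i=2\eta^{ij}$; $\partial^i:=\eta^{ij}\partial_j$ (summed). $X=\frac{\sqrt{-1}}{\sqrt2}\gamma^i\partial_i$ and $\operatorname{ad}(X)(b)=Xb-(-1)^{|b|}bX$ for homogeneous $b$ (supercommutator). Bracket symbol: for integers $a,p,q,t\ge0$ with $2a+p+q+t=m$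 (exponents of $\eta,x,\gamma,\partial$) and indices $i_1,\dots,i_m$, for $\sigma\in S_m$ put $T_\sigma:=\prod_{k=0}^{a-1}\eta^{i_{\sigma(2k+1)}i_{\sigma(2k+2)}}\cdot x^{i_{\sigma(2a+1)}}\cdots x^{i_{\sigma(2a+p)}}\cdot\gamma^{i_{\sigma(2a+p+1)}}\cdots\gamma^{i_{\sigma(2a+p+q)}}\cdot\partial^{i_{\sigma(2a+p+q+1)}}\cdots\partial^{i_{\sigma(m)}}$ and $[\eta^ax^p\gamma^q\partial^t;i_1,\dots,i_m]:=\frac1{2^a a!p!t!}\sum_{\sigma\in S_m}T_\sigma$ (factors with exponent $0$ omitted; the symbol is $0$ if the exponent of $x$ is negative). *)

(* Defs.v *)
From HB Require Import structures.
From mathcomp Require Import all_boot all_order all_fingroup all_algebra.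
Set Implicit Arguments. Unset Strict Implicit. Unset Printing Implicit Defensive.
Import Order.TTheory GRing.Theory Num.Theory.
Local Open Scope ring_scope.

(* W(2n|n) is presented by generators and relations; an identity holds in it
   iff it holds in every C-algebra A with elements x_i, d_i (= partial_i),
   g_i (= gamma^i) satisfying the defining relations.  *)
Section W.
Variables (C : numClosedFieldType) (A : algType C) (n : nat).
Variables (eta : 'M[C]_n) (x d g : 'I_n -> A).

Definition Wrel : Prop :=
  (forall i j, x i * x j = x j * x i) /\
  (forall i j, d i * d j = d j * d i) /\
  (forall i j, d i * x j - x j * d i = (i == j)%:R) /\
  (forall i j, g i * x j = x j * g i) /\
  (forall i j, g i * d j = d j * g i) /\
  (forall i j, g i * g j + g j * g i = (2 * eta i j)%:A).

Definition dup (i : 'I_n) : A := \sum_(j < n) eta i j *: d j.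

Definition Xop : A := ('i / sqrtC 2) *: \sum_(i < n) g i * d i.

Definition adX (par : bool) (b : A) : A := Xop * b - (-1) ^+ par * b * Xop.

Definition optf (f : 'I_n -> A) (o : option 'I_n) : A :=
  if o is Some i then f i else 1.
Definition opte (o1 o2 : option 'I_n) : C :=
  if (o1, o2) is (Some i, Some j) then eta i j else 1.

(* the bracket symbol [eta^a x^p gamma^q partial^t ; i_1..i_m] *)
Definition bracket (m : nat) (idx : 'I_m -> 'I_n) (a p q t : nat) : A :=
  let si (s : 'S_m) (j : nat) : option 'I_n :=
    if insub j is Some k then Some (idx (s k)) else None in
  ((2 ^ a * a`! * p`! * t`!)%N%:R)^-1 *:
  \sum_(s : 'S_m)
    ((\prod_(k < a) opte (si s (2 * k)%N) (si s (2 * k + 1)%N)) *: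
     ((\prod_(k < p) optf x (si s (2 * a + k)%N)) *
      (\prod_(k < q) optf g (si s (2 * a + p + k)%N)) *
      (\prod_(k < t) optf dup (si s (2 * a + p + q + k)%N)))).
End W.

(* Main.v *)
Require Import Defs.
From HB Require Import structures.
From mathcomp Require Import all_boot all_order all_fingroup all_algebra.
From mathcomp Require Import zify ring.
From Stdlib Require Import FunctionalExtensionality.
Import Order.TTheory GRing.Theory Num.Theory.
Local Open Scope ring_scope.
Set Implicit Arguments. Unset Strict Implicit.
Section Gen.
Variables (C : numClosedFieldType) (A : algType C).

Lemma commZ (u v : A) (c : C) : GRing.comm u v -> GRing.comm u (c *: v).
Proof. by rewrite /GRing.comm -scalerAl -scalerAr => ->. Qed.

Lemma prod_rem (s : seq A) (y : A) : y \in s ->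
  {in s &, forall u v, u * v = v * u} ->
  \prod_(z <- s) z = y * \prod_(z <- rem y s) z.
Proof.
elim: s => //= b s IH; rewrite in_cons big_cons => /orP [/eqP ->|ys] hc.
  by rewrite eqxx.
case: eqP => [->|nb]; first by [].
rewrite big_cons IH //; last by move=> u v us vs; apply: hc; rewrite in_cons ?us ?vs orbT.
rewrite !mulrA; congr (_ * _); apply: hc; rewrite ?in_cons ?eqxx ?ys ?orbT //.
Qed.

Lemma prod_perm_comm (s1 s2 : seq A) : perm_eq s1 s2 ->
  {in s2 &, forall u v, u * v = v * u} ->
  \prod_(z <- s1) z = \prod_(z <- s2) z.
Proof.
elim: s1 s2 => [|y s1 IH] s2 hp hc.
  by move: hp; rewrite perm_sym => /perm_nilP ->.
have ys2 : y \in s2 by rewrite -(perm_mem hp) mem_head.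
rewrite big_cons (@prod_rem s2 y ys2 hc); congr (_ * _); apply: IH.
  by rewrite -(perm_cons y); apply: (perm_trans hp); apply: perm_to_rem.
by move=> u v /mem_rem us /mem_rem vs; apply: hc.
Qed.

Lemma prod_ord_perm (p : nat) (F : nat -> A) (rho : nat -> nat) :
  (forall l, (l < p)%N -> (rho l < p)%N) ->
  (forall l1 l2, (l1 < p)%N -> (l2 < p)%N -> rho l1 = rho l2 -> l1 = l2) ->
  (forall i j, (i < p)%N -> (j < p)%N -> F i * F j = F j * F i) ->
  \prod_(l < p) F (rho l) = \prod_(l < p) F l.
Proof.
move=> hr hi hc.
rewrite -(big_mkord xpredT (fun l => F (rho l))) -(big_mkord xpredT F).
rewrite /index_iota subn0 -(big_map (fun l => F (rho l)) xpredT id).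
rewrite -(big_map F xpredT id).
have hU : uniq [seq rho l | l <- iota 0 p].
  rewrite map_inj_in_uniq ?iota_uniq // => l1 l2; rewrite !mem_iota /= !add0n.
  exact: hi.
have hS : {subset [seq rho l | l <- iota 0 p] <= iota 0 p}.
  by move=> z /mapP [l]; rewrite !mem_iota /= !add0n => /hr ? ->.
have := uniq_min_size hU hS; rewrite size_map => /(_ (leqnn _)) [_ heq].
have hP : perm_eq [seq rho l | l <- iota 0 p] (iota 0 p).
  by apply: uniq_perm => //; apply: iota_uniq.
apply: prod_perm_comm.
  have -> : [seq F (rho l) | l <- iota 0 p] = [seq F l | l <- [seq rho l | l <- iota 0 p]] by rewrite -map_comp.
  by apply: perm_map.
by move=> u v /mapP [i]; rewrite mem_iota add0n /= => hi' -> /mapP [j];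
  rewrite mem_iota add0n /= => hj ->; apply: hc.
Qed.

Variables (n m : nat) (idx : 'I_m -> 'I_n) (i0 : 'I_n).

Definition uu (s : 'S_m) (j : nat) : 'I_n :=
  if insub j is Some k then idx (s k) else i0.

Lemma sum_reindex (F : (nat -> 'I_n) -> A) (rho : nat -> nat) :
  (forall l, (l < m)%N -> (rho l < m)%N) ->
  (forall l, (m <= l)%N -> rho l = l) ->
  (forall l1 l2, (l1 < m)%N -> (l2 < m)%N -> rho l1 = rho l2 -> l1 = l2) ->
  \sum_(s : 'S_m) F (uu s) = \sum_(s : 'S_m) F (fun l => uu s (rho l)).
Proof.
move=> hr hout hi.
pose f := fun k : 'I_m => insubd k (rho k).
have fv : forall k : 'I_m, val (f k) = rho k.
  by move=> k; rewrite /f val_insubd hr.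
have finj : injective f.
  move=> k1 k2 /(congr1 val); rewrite !fv => e; apply: val_inj; exact: hi (ltn_ord k1) (ltn_ord k2) e.
pose tau := perm finj.
rewrite (reindex_inj (mulgI tau)); apply: eq_bigr => s _; congr F.
apply: functional_extensionality => l.
rewrite /uu; case: insubP => [k hk kv|].
  rewrite permM permE.
  case: insubP => [k' hk' k'v|]; last by rewrite hr.
  by congr (idx (s _)); apply: val_inj; rewrite fv k'v kv.
rewrite -leqNgt => hl; rewrite hout //; case: insubP => //.
by rewrite ltnNge hl.
Qed.
End Gen.

Section Sw.
Local Open Scope nat_scope.
Definition sw (i j l : nat) : nat := if l == i then j else if l == j then i else l.
Lemma swK i j l : sw i j (sw i j l) = l.
Proof. rewrite /sw; repeat case: eqP; lia. Qed.
Lemma sw_lt i j l p : i < p -> j < p -> l < p -> sw i j l < p.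
Proof. rewrite /sw; repeat case: eqP; lia. Qed.
Lemma sw_id i j l : l != i -> l != j -> sw i j l = l.
Proof. rewrite /sw; repeat case: eqP; lia. Qed.
Lemma sw_inj i j l1 l2 : sw i j l1 = sw i j l2 -> l1 = l2.
Proof. by move=> /(congr1 (sw i j)); rewrite !swK. Qed.
Lemma sw_add b i j l : sw (b + i) (b + j) (b + l) = b + sw i j l.
Proof. rewrite /sw; repeat case: eqP; lia. Qed.
Lemma sw_l i j : sw i j i = j.
Proof. by rewrite /sw eqxx. Qed.
Lemma sw_r i j : sw i j j = i.
Proof. rewrite /sw; repeat case: eqP; lia. Qed.
Definition rotb (b s l : nat) : nat :=
  if (b <= l) && (l + 2 <= b + s) then l + 2
  else if l == b + s - 1 then b else if l == b + s then b + 1 else l.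
Lemma rotb_lt b s l p : 1 <= s -> b + s < p -> l < p -> rotb b s l < p.
Proof. rewrite /rotb; repeat case: ifP; repeat case: eqP; lia. Qed.
Lemma rotb_inj b s l1 l2 : 1 <= s -> rotb b s l1 = rotb b s l2 -> l1 = l2.
Proof. rewrite /rotb; repeat case: ifP; repeat case: eqP; lia. Qed.
End Sw.

Section Alg.
Variables (C : numClosedFieldType) (A : algType C) (n : nat).
Variables (eta : 'M[C]_n) (x d g : 'I_n -> A).
Hypothesis hxx : forall i j, x i * x j = x j * x i.
Hypothesis hdd : forall i j, d i * d j = d j * d i.
Hypothesis hdx : forall i j, d i * x j - x j * d i = (i == j)%:R.
Hypothesis hgx : forall i j, g i * x j = x j * g i.
Hypothesis hgd : forall i j, g i * d j = d j * g i.
Hypothesis hgg : forall i j, g i * g j + g j * g i = (2 * eta i j)%:A.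
Hypothesis heta : forall i j, eta i j = eta j i.


Lemma comm_gD i j : GRing.comm (g i) (dup eta d j).
Proof. by apply: commr_sum => k _; apply: commZ; apply: hgd. Qed.
Lemma comm_dD i j : GRing.comm (d i) (dup eta d j).
Proof. by apply: commr_sum => k _; apply: commZ; apply: hdd. Qed.

Definition Pk (F : nat -> 'I_n) (p k : nat) : A :=
  \prod_(l < p) (if (l : nat) == k then 1 else x (F l)).

Lemma sum_delta (f : 'I_n -> A) j : \sum_i (i == j)%:R * f i = f j.
Proof.
rewrite (bigD1 j) //= eqxx mul1r big1 ?addr0 // => i /negbTE ->.
by rewrite mul0r.
Qed.

Lemma comm_dP i (F : nat -> 'I_n) p :
  d i * \prod_(l < p) x (F l) - \prod_(l < p) x (F l) * d i
  = \sum_(k < p) (i == F k)%:R * Pk F p k.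
Proof.
elim: p => [|p IH]; first by rewrite !big_ord0 mulr1 mul1r subrr.
rewrite !big_ord_recr /=.
set P := \prod_(l < p) x (F l); set y := x (F p).
have -> : d i * (P * y) - P * y * d i = (d i * P - P * d i) * y + P * (d i * y - y * d i).
  by rewrite mulrBl mulrBr !mulrA addrA subrK.
rewrite IH hdx mulr_suml /Pk big_ord_recr /= eqxx mulr1.
have -> : \prod_(i0 < p) (if (i0 : nat) == p then 1 else x (F i0)) = P.
  by apply: eq_bigr => l _; rewrite ltn_eqF.
rewrite -(commr_nat P); congr (_ + _); apply: eq_bigr => k _ /=.
by rewrite /Pk big_ord_recr /= [(p == k)%N]eq_sym ltn_eqF // mulrA.
Qed.

Definition ETA a (u : nat -> 'I_n) : C :=
  \prod_(k < a) eta (u (2 * k)%N) (u (2 * k + 1)%N).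

Definition Term a p q t (u : nat -> 'I_n) : A :=
  ETA a u *: ((\prod_(k < p) x (u (2 * a + k)%N)) *
      (\prod_(k < q) g (u (2 * a + p + k)%N)) *
      (\prod_(k < t) dup eta d (u (2 * a + p + q + k)%N))).

Definition cc : C := 'i / sqrtC 2.

Lemma XS : Xop d g = cc *: \sum_(i < n) g i * d i.
Proof. by []. Qed.

Lemma comm_gPk i (F : nat -> 'I_n) p k : GRing.comm (g i) (Pk F p k).
Proof. by apply: commr_prod => l _; case: eqP => _; [apply: commr1|apply: hgx]. Qed.

Lemma comm_gP i (F : nat -> 'I_n) p : GRing.comm (g i) (\prod_(l < p) x (F l)).
Proof. by apply: commr_prod => l _; apply: hgx. Qed.

Lemma comm_gQ i (F : nat -> 'I_n) t : GRing.comm (g i) (\prod_(l < t) dup eta d (F l)).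
Proof. by apply: commr_prod => l _; apply: comm_gD. Qed.

Lemma comm_dQ i (F : nat -> 'I_n) t : GRing.comm (d i) (\prod_(l < t) dup eta d (F l)).
Proof. by apply: commr_prod => l _; apply: comm_dD. Qed.

Lemma adX0_u a s t u :
  Xop d g * Term a s 0 t u - Term a s 0 t u * Xop d g =
  cc *: \sum_(k < s) (ETA a u *: (g (u (2 * a + k)%N) *
      Pk (fun l => u (2 * a + l)%N) s k *
      \prod_(k < t) dup eta d (u (2 * a + s + 0 + k)%N))).
Proof.
rewrite XS /Term big_ord0 mulr1.
set E := ETA a u; set P := \prod_(k < s) _; set Q := \prod_(k < t) _.
rewrite -!scalerAl -!scalerAr !scalerA mulrC -scalerBr.
rewrite -scaler_sumr scalerA [E * cc]mulrC; congr (_ *: _).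
have hPg i : g i * P = P * g i := comm_gP i (fun k => u (2 * a + k)%N) s.
have hQg i : g i * Q = Q * g i := comm_gQ i (fun k => u (2 * a + s + 0 + k)%N) t.
have hQd i : d i * Q = Q * d i := comm_dQ i (fun k => u (2 * a + s + 0 + k)%N) t.
rewrite mulr_suml mulr_sumr -sumrB.
under eq_bigr => i _.
  have -> : g i * d i * (P * Q) - P * Q * (g i * d i) = g i * (d i * P - P * d i) * Q.
    rewrite mulrBr mulrBl; congr (_ - _); first by rewrite !mulrA.
    rewrite [LHS]mulrA -[P * Q * g i]mulrA -hQg mulrA -hPg.
    by rewrite -!mulrA hQd.
  rewrite (comm_dP i (fun k => u (2 * a + k)%N) s) mulr_sumr mulr_suml.
  under eq_bigr => k _ do rewrite mulrA (commr_nat (g i)) -!mulrA.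
  over.
rewrite exchange_big /=; apply: eq_bigr => k _.
by rewrite (sum_delta (fun i => g i * (Pk _ s k * Q))) !mulrA.
Qed.


Lemma adX1_u a s t u :
  Xop d g * Term a s 1 t u + Term a s 1 t u * Xop d g =
  cc *: (2 *: Term a s 0 t.+1 u + \sum_(k < s) (ETA a u *: (g (u (2 * a + k)%N) *
      g (u (2 * a + s + 0)%N) * Pk (fun l => u (2 * a + l)%N) s k *
      \prod_(k < t) dup eta d (u (2 * a + s + 1 + k)%N)))).
Proof.
have -> : Term a s 0 t.+1 u = ETA a u *: (\prod_(k < s) x (u (2 * a + k)%N) *
   dup eta d (u (2 * a + s + 0)%N) * \prod_(k < t) dup eta d (u (2 * a + s + 1 + k)%N)).
  rewrite /Term big_ord0 mulr1 big_ord_recl /= !addn0 mulrA; congr (_ *: (_ * _)).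
  by apply: eq_bigr => k _; congr (dup _ _ (u _)); rewrite /bump /=; lia.
rewrite XS /Term big_ord1 /=.
set E := ETA a u; set P := \prod_(k < s) _; set Q := \prod_(k < t) _.
set G := g (u (2 * a + s + 0)%N); set j := u (2 * a + s + 0)%N.
rewrite -!scalerAl -!scalerAr !scalerA mulrC -scalerDr.
rewrite -scaler_sumr [2 * E]mulrC -(scalerA E 2) -scalerDr scalerA [cc * E]mulrC.
congr (_ *: _).
have hPg i : g i * P = P * g i := comm_gP i (fun k => u (2 * a + k)%N) s.
have hQg i : g i * Q = Q * g i := comm_gQ i (fun k => u (2 * a + s + 1 + k)%N) t.
have hQd i : d i * Q = Q * d i := comm_dQ i (fun k => u (2 * a + s + 1 + k)%N) t.
rewrite mulr_suml big_distrr -big_split /=.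
under eq_bigr => i _.
  have L1 : g i * d i * (P * G * Q) = g i * G * (d i * P) * Q.
    have hc : G * (d i * P) = d i * P * G := commrM (hgd _ i) (hPg _).
    transitivity (g i * ((d i * P) * G) * Q); first by rewrite !mulrA.
    by rewrite -hc !mulrA.
  have L2 : P * G * Q * (g i * d i) = G * g i * (P * d i) * Q.
    transitivity ((P * G) * (Q * g i) * d i); first by rewrite !mulrA.
    rewrite -hPg -hQg; transitivity (G * (P * g i) * (Q * d i)); first by rewrite !mulrA.
    by rewrite -hPg -hQd !mulrA.
  have -> : g i * d i * (P * G * Q) + P * G * Q * (g i * d i) =
     g i * G * (d i * P - P * d i) * Q + (g i * G + G * g i) * (P * d i) * Q.
    by rewrite L1 L2 mulrBr mulrBl !mulrDl addrA subrK.
  rewrite (comm_dP i (fun k => u (2 * a + k)%N) s) hgg.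
  over.
rewrite big_split addrC /=; congr (_ + _); last first.
  rewrite /dup mulr_sumr mulr_suml scaler_sumr; apply: eq_bigr => i _.
  by rewrite -mulr_algl -!scalerAl -scalerAr -scalerAl scalerA heta !mul1r.
under eq_bigr => i _ do rewrite mulr_sumr mulr_suml.
under eq_bigr => i _ do under eq_bigr => k _ do rewrite mulrA (commr_nat (g i * G)) -!mulrA.
rewrite exchange_big /=; apply: eq_bigr => k _.
by rewrite (sum_delta (fun i => g i * (G * (Pk _ s k * Q)))) !mulrA.
Qed.

Lemma Pk_move (G F : nat -> 'I_n) s k : (k < s)%N ->
  (forall l, (l < s)%N -> G l = F (sw k s.-1 l)) ->
  Pk G s k = \prod_(l < s.-1) x (F l).
Proof.
case: s => // s' ks hG /=; rewrite /Pk.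
pose H l := if l == s' then 1 else x (F l).
transitivity (\prod_(l < s'.+1) H (sw k s' l)).
  apply: eq_bigr => l _; rewrite /H hG //.
  case: (eqVneq (l : nat) k) => [->|nk]; first by rewrite sw_l eqxx.
  suff -> : (sw k s' l == s') = false by [].
  apply/eqP => e; have e' : sw k s' l = sw k s' k by rewrite sw_l e.
  by move: nk; rewrite (@sw_inj k s' _ _ e') eqxx.
rewrite (@prod_ord_perm _ _ s'.+1 H (sw k s')).
- by rewrite big_ord_recr /= /H eqxx mulr1; apply: eq_bigr => l _; rewrite ltn_eqF.
- by move=> l ls; apply: sw_lt.
- by move=> l1 l2 _ _; apply: sw_inj.
- move=> i j _ _; rewrite /H; case: eqP; case: eqP => _ _;
  by rewrite ?mul1r ?mulr1.
Qed.

Lemma G0_move a s t k u : (k < s)%N ->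
  ETA a (fun l => u (sw (2*a+k) (2*a+s.-1) l)) *:
   (g (u (sw (2*a+k) (2*a+s.-1) (2*a+k))) *
    Pk (fun l => u (sw (2*a+k) (2*a+s.-1) (2*a+l))) s k *
    \prod_(k0 < t) dup eta d (u (sw (2*a+k) (2*a+s.-1) (2*a+s+0+k0))))
  = Term a s.-1 1 t u.
Proof.
move=> ks; rewrite sw_l /Term; congr (_ *: _).
  apply: eq_bigr => j _; rewrite !sw_id //; apply/eqP; have := ltn_ord j; lia.
rewrite (@Pk_move _ (fun l => u (2 * a + l)%N) s k ks); last first.
  by move=> l _; rewrite sw_add.
rewrite big_ord1 /= !addn0 -(comm_gP _ (fun l => u (2 * a + l)%N)); congr (_ * _).
apply: eq_bigr => j _; rewrite sw_id; try (apply/eqP; lia).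
congr (dup _ _ (u _)); lia.
Qed.

Definition H1 a s t u : A := ETA a u *: (g (u (2*a+s.-1)%N) * g (u (2*a+s)%N) *
   \prod_(l < s.-1) x (u (2*a+l)%N) * \prod_(k0 < t) dup eta d (u (2*a+s+1+k0)%N)).

Definition K1 a s t u : A := (ETA a u * eta (u (2*a+s.-1)%N) (u (2*a+s)%N)) *:
   (\prod_(l < s.-1) x (u (2*a+l)%N) * \prod_(k0 < t) dup eta d (u (2*a+s+1+k0)%N)).

Lemma G1_move a s t k u : (k < s)%N ->
  ETA a (fun l => u (sw (2*a+k) (2*a+s.-1) l)) *:
   (g (u (sw (2*a+k) (2*a+s.-1) (2*a+k))) * g (u (sw (2*a+k) (2*a+s.-1) (2*a+s+0))) *
    Pk (fun l => u (sw (2*a+k) (2*a+s.-1) (2*a+l))) s k *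
    \prod_(k0 < t) dup eta d (u (sw (2*a+k) (2*a+s.-1) (2*a+s+1+k0))))
  = H1 a s t u.
Proof.
move=> ks; rewrite sw_l /H1; congr (_ *: _).
  apply: eq_bigr => j _; rewrite !sw_id //; apply/eqP; have := ltn_ord j; lia.
rewrite (@Pk_move _ (fun l => u (2 * a + l)%N) s k ks); last first.
  by move=> l _; rewrite sw_add.
rewrite addn0 sw_id; try (apply/eqP; lia).
congr (_ * _); apply: eq_bigr => j _; rewrite sw_id //; apply/eqP; lia.
Qed.

Lemma H1_sym a s t u :
  H1 a s t u + H1 a s t (fun l => u (sw (2*a+s.-1) (2*a+s) l)) = 2 *: K1 a s t u.
Proof.
rewrite /H1 /K1 sw_l sw_r.
have -> : ETA a (fun l => u (sw (2*a+s.-1) (2*a+s) l)) = ETA a u.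
  apply: eq_bigr => j _; rewrite !sw_id //; apply/eqP; have := ltn_ord j; lia.
have -> : \prod_(l < s.-1) x (u (sw (2*a+s.-1) (2*a+s) (2*a+l))) = \prod_(l < s.-1) x (u (2*a+l)%N).
  apply: eq_bigr => j _; rewrite !sw_id //; apply/eqP; have := ltn_ord j; lia.
have -> : \prod_(k0 < t) dup eta d (u (sw (2*a+s.-1) (2*a+s) (2*a+s+1+k0))) =
          \prod_(k0 < t) dup eta d (u (2*a+s+1+k0)%N).
  apply: eq_bigr => j _; rewrite !sw_id //; apply/eqP; lia.
rewrite -scalerDr -!mulrA !(mulrA (g _) (g _)) -mulrDl hgg.
by rewrite mulr_algl !scalerA mulrCA.
Qed.

Lemma K1_rot a s t u : (1 <= s)%N ->
  K1 a s t (fun l => u (rotb (2*a) s l)) = Term a.+1 s.-1 0 t u.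
Proof.
move=> s1; rewrite /K1 /Term big_ord0 mulr1.
have r1 : rotb (2*a) s (2*a+s.-1) = (2*a)%N by rewrite /rotb; repeat case: ifP; repeat case: eqP; lia.
have r2 : rotb (2*a) s (2*a+s) = (2*a+1)%N by rewrite /rotb; repeat case: ifP; repeat case: eqP; lia.
rewrite r1 r2; congr (_ *: (_ * _)).
- rewrite /ETA big_ord_recr /=; congr (_ * _).
  apply: eq_bigr => j _; congr (eta (u _) (u _)); rewrite /rotb;
  have := ltn_ord j; repeat case: ifP; repeat case: eqP; lia.
- apply: eq_bigr => j _; congr (x (u _)); rewrite /rotb;
  have := ltn_ord j; repeat case: ifP; repeat case: eqP; lia.
- apply: eq_bigr => j _; congr (dup _ _ (u _)); rewrite /rotb;
  repeat case: ifP; repeat case: eqP; lia.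
Qed.

End Alg.

Lemma bracket_Term (C : numClosedFieldType) (A : algType C) (n : nat)
  (eta : 'M[C]_n) (x d g : 'I_n -> A) (m : nat) (idx : 'I_m -> 'I_n) (i0 : 'I_n) a p q t :
  (2*a+p+q+t)%N = m ->
  bracket eta x d g idx a p q t = ((2 ^ a * a`! * p`! * t`!)%N%:R)^-1 *:
    \sum_(s : 'S_m) Term eta x d g a p q t (uu idx i0 s).
Proof.
move=> hm; rewrite /bracket /=; congr (_ *: _); apply: eq_bigr => s _.
have E : forall j, (j < m)%N -> (if insub j is Some k then Some (idx (s k)) else None) = Some (uu idx i0 s j).
  by move=> j hj; rewrite /uu; case: insubP => //=; rewrite hj.
rewrite /Term; congr (_ *: (_ * _ * _)).
- apply: eq_bigr => k _; rewrite !E //=; have := ltn_ord k; lia.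
- apply: eq_bigr => k _; rewrite !E //=; have := ltn_ord k; lia.
- apply: eq_bigr => k _; rewrite !E //=; have := ltn_ord k; lia.
- apply: eq_bigr => k _; rewrite !E //=; have := ltn_ord k; lia.
Qed.

Unset Implicit Arguments.
Set Strict Implicit.

Theorem lemma5p2 (C : numClosedFieldType) (A : algType C) (n : nat)
  (eta : 'M[C]_n) (x d g : 'I_n -> A) (m : nat) (idx : 'I_m -> 'I_n)
  (a r s t : nat) :
  (0 < n)%N -> eta^T = eta -> eta \in unitmx -> Wrel eta x d g ->
  (1 <= s)%N -> (2 * a + s + r + t)%N = m ->
  (r = 0%N ->
     adX d g (odd 0) (bracket eta x d g idx a s 0 t)
     = ('i / sqrtC 2) *: bracket eta x d g idx a s.-1 1 t) /\
  (r = 1%N ->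
     adX d g (odd 1) (bracket eta x d g idx a s 1 t)
     = (2 * 'i * (a.+1)%:R / sqrtC 2) *: bracket eta x d g idx a.+1 s.-1 0 t
       + (2 * 'i * (t.+1)%:R / sqrtC 2) *: bracket eta x d g idx a s 0 t.+1).
Proof.
move=> hn hT _ [hxx [hdd [hdx [hgx [hgd hgg]]]]] hs hm.
have heta : forall i j, eta i j = eta j i by move=> i j; rewrite -[in LHS]hT mxE.
pose i0 := Ordinal hn.
case: s hs hm => // s' _ hm.
split => hr; subst r.
- rewrite /adX /= expr0 mul1r !(@bracket_Term _ _ _ eta x d g m idx i0); try lia.
  set X := Xop d g.
  rewrite -(scalerAr _ X) -(scalerAl _ _ X) -scalerBr mulr_sumr mulr_suml -sumrB /X.
  under eq_bigr => sg _ do rewrite adX0_u //.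
  rewrite -scaler_sumr exchange_big /=.
  have step : forall j : 'I_s'.+1,
     \sum_(sg : 'S_m) ETA eta a (uu idx i0 sg) *:
         (g (uu idx i0 sg (2 * a + j)) *
          Pk x (fun l : nat => uu idx i0 sg (2 * a + l)) s'.+1 j *
          \prod_(k < t) dup eta d (uu idx i0 sg (2 * a + s'.+1 + 0 + k)))
     = \sum_(sg : 'S_m) Term eta x d g a s' 1 t (uu idx i0 sg).
    move=> j.
    rewrite (@sum_reindex _ _ _ _ idx i0 (fun u => ETA eta a u *:
         (g (u (2 * a + j)%N) * Pk x (fun l : nat => u (2 * a + l)%N) s'.+1 j *
          \prod_(k < t) dup eta d (u (2 * a + s'.+1 + 0 + k)%N)))
          (sw (2 * a + j) (2 * a + s'.+1.-1))).
    - by apply: eq_bigr => sg _; apply: (G0_move eta d hxx hgx).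
    - move=> l hl; apply: sw_lt => //; have := ltn_ord j; lia.
    - move=> l hl; apply: sw_id; apply/eqP; have := ltn_ord j; lia.
    - by move=> l1 l2 _ _; apply: sw_inj.
  rewrite (eq_bigr _ (fun j _ => step j)) sumr_const card_ord -scaler_nat !scalerA.
  congr (_ *: _).
  rewrite /cc factS !natrM; field.
  by rewrite sqrtC_eq0 addrC natr1 !pnatr_eq0 -!lt0n !fact_gt0 expn_gt0.
- rewrite /adX /= expr1 mulN1r mulNr opprK !(@bracket_Term _ _ _ eta x d g m idx i0); try lia.
  set X := Xop d g.
  rewrite -(scalerAr _ X) -(scalerAl _ _ X) -scalerDr mulr_sumr mulr_suml -big_split /X /=.
  under eq_bigr => sg _ do rewrite (adX1_u hdd hdx hgx hgd hgg heta).
  rewrite -scaler_sumr big_split /= -scaler_sumr exchange_big /=.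
  have step1 : forall j : 'I_s'.+1,
     \sum_(sg : 'S_m) ETA eta a (uu idx i0 sg) *:
         (g (uu idx i0 sg (2 * a + j)) * g (uu idx i0 sg (2 * a + s'.+1 + 0)) *
          Pk x (fun l : nat => uu idx i0 sg (2 * a + l)) s'.+1 j *
          \prod_(k < t) dup eta d (uu idx i0 sg (2 * a + s'.+1 + 1 + k)))
     = \sum_(sg : 'S_m) H1 eta x d g a s'.+1 t (uu idx i0 sg).
    move=> j.
    rewrite (@sum_reindex _ _ _ _ idx i0 (fun u => ETA eta a u *:
         (g (u (2 * a + j)%N) * g (u (2 * a + s'.+1 + 0)%N) *
          Pk x (fun l : nat => u (2 * a + l)%N) s'.+1 j *
          \prod_(k < t) dup eta d (u (2 * a + s'.+1 + 1 + k)%N)))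
          (sw (2 * a + j) (2 * a + s'.+1.-1))).
    - by apply: eq_bigr => sg _; apply: (G1_move eta d g hxx).
    - move=> l hl; apply: sw_lt => //; have := ltn_ord j; lia.
    - move=> l hl; apply: sw_id; apply/eqP; have := ltn_ord j; lia.
    - by move=> l1 l2 _ _; apply: sw_inj.
  rewrite (eq_bigr _ (fun j _ => step1 j)) sumr_const card_ord -scaler_nat.
  have step2 : \sum_(sg : 'S_m) H1 eta x d g a s'.+1 t (uu idx i0 sg) =
               \sum_(sg : 'S_m) K1 eta x d a s'.+1 t (uu idx i0 sg).
    apply: (@scalerI _ _ 2); first by rewrite pnatr_eq0.
    rewrite scaler_nat mulr2n {2}(@sum_reindex _ _ _ _ idx i0 (H1 eta x d g a s'.+1 t)
          (sw (2 * a + s'.+1.-1) (2 * a + s'.+1))).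
    - rewrite -big_split scaler_sumr; apply: eq_bigr => sg _.
      exact: (H1_sym x d hgg).
    - move=> l hl; apply: sw_lt => //; lia.
    - move=> l hl; apply: sw_id; apply/eqP; lia.
    - by move=> l1 l2 _ _; apply: sw_inj.
  have step3 : \sum_(sg : 'S_m) K1 eta x d a s'.+1 t (uu idx i0 sg) =
               \sum_(sg : 'S_m) Term eta x d g a.+1 s' 0 t (uu idx i0 sg).
    rewrite (@sum_reindex _ _ _ _ idx i0 (K1 eta x d a s'.+1 t) (rotb (2 * a)%N s'.+1)).
    - by apply: eq_bigr => sg _; apply: (K1_rot eta x d g).
    - move=> l hl; apply: rotb_lt => //; lia.
    - move=> l hl; rewrite /rotb; repeat case: ifP; repeat case: eqP; lia.
    - by move=> l1 l2 _ _ e; exact: (rotb_inj (ltn0Sn s') e).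
  rewrite step2 step3 !scalerDr !scalerA [in LHS]addrC.
  congr (_ *: _ + _ *: _).
  + rewrite /cc !factS expnS !natrM; field.
    by repeat (apply/andP; split); rewrite ?sqrtC_eq0 ?pnatr_eq0 -?lt0n ?fact_gt0 ?expn_gt0 //;
      rewrite addrC natr1 pnatr_eq0.
  + rewrite /cc (factS t) !natrM; field.
    by repeat (apply/andP; split); rewrite ?sqrtC_eq0 ?pnatr_eq0 -?lt0n ?fact_gt0 ?expn_gt0 //;
      rewrite addrC natr1 pnatr_eq0.
Qed.
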